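(* Let $V\in\mathbb{C}$ and let $A(V,0,\pi)$ be the operator in $L_2(0,1)$ acting by $A(V,0,\pi)\psi=i\psi'+V\big[\psi(0)-\tfrac{i}{2}\langle\psi,V\rangle\big]$ on the domain of $\psi\in W_2^1(0,1)$ with $\psi(1)=-[\psi(0)-i\langle\psi,V\rangle]$, where $\langle\psi,V\rangle=\overline{V}\int_0^1\psi(x)\,dx$ (the potential is the constant function $V$). Then $\lambda=0$ is an eigenvalue of $A(V,0,\pi)$ if and only if $V=2i$. In this case $\lambda=0$ has multiplicity $2$, and the corresponding orthogonal eigenfunctions are $\psi_1(x)=1$ and $\psi_2(x)=x-\tfrac12$.
   Context: $\langle f,g\rangle=\int_0^1 f\bar g\,dx$; $W_2^1(0,1)$ is the Sobolev space. *)

(* Defs.v *)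
From HB Require Import structures.
From mathcomp Require Import all_boot all_order all_algebra.
From mathcomp Require Import all_classical all_reals all_analysis.
From mathcomp Require Import complex.
Set Implicit Arguments. Unset Strict Implicit. Unset Printing Implicit Defensive.
Import Order.TTheory GRing.Theory Num.Theory.
Local Open Scope classical_set_scope.
Local Open Scope ring_scope.
Local Open Scope complex_scope.

Section Defs.
Variable R : realType.
Local Notation mu := (@lebesgue_measure R).

Definition iu : R[i] := Complex 0 1.

Definition cint (f : R -> R[i]) (a b : R) : R[i] :=
  (Rintegral mu `[a, b] (fun x => complex.Re (f x))) +i*
  (Rintegral mu `[a, b] (fun x => complex.Im (f x))).

Definition L2_01 (g : R -> R) : Prop :=
  measurable_fun `[(0:R), 1] g /\ mu.-integrable `[(0:R), 1] (fun x => ((g x) ^+ 2)%:E).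

(* psi is in W_2^1(0,1) with (weak) derivative g in L_2(0,1):
   psi(x) = psi(0) + int_0^x g on [0,1] (absolutely continuous representative) *)
Definition W21 (psi g : R -> R[i]) : Prop :=
  L2_01 (fun x => complex.Re (g x)) /\ L2_01 (fun x => complex.Im (g x)) /\
  forall x, 0 <= x <= 1 -> psi x = psi 0 + cint g 0 x.

Definition ip01 (f h : R -> R[i]) : R[i] := cint (fun x => f x * (h x)^*) 0 1.

Definition ipV (V : R[i]) (psi : R -> R[i]) : R[i] := ip01 psi (fun _ => V).

Definition in_dom (V : R[i]) (psi g : R -> R[i]) : Prop :=
  W21 psi g /\ psi 1 = - (psi 0 - iu * ipV V psi).

Definition A_act (V : R[i]) (psi g : R -> R[i]) (x : R) : R[i] :=
  iu * g x + V * (psi 0 - (iu / 2%:R) * ipV V psi).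

(* psi in dom A and A psi = lam psi in L_2(0,1) (i.e. a.e. on [0,1]) *)
Definition eigen_eq (V lam : R[i]) (psi : R -> R[i]) : Prop :=
  exists g, in_dom V psi g /\
    {ae mu, forall x, x \in `[(0:R), 1] -> A_act V psi g x = lam * psi x}.

(* psi is the zero element of L_2(0,1) *)
Definition L2_zero (psi : R -> R[i]) : Prop :=
  {ae mu, forall x, x \in `[(0:R), 1] -> psi x = 0}.

Definition is_eigenvalue (V lam : R[i]) : Prop :=
  exists psi, eigen_eq V lam psi /\ ~ L2_zero psi.

End Defs.

(* Main.v *)
Require Import Defs.
From HB Require Import structures.
From mathcomp Require Import all_boot all_order all_algebra.
From mathcomp Require Import all_classical all_reals all_analysis.
From mathcomp Require Import complex ring lra.
From mathcomp Require Import unstable measurable_realfun.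
Import Order.TTheory GRing.Theory Num.Theory.
Local Open Scope classical_set_scope.
Local Open Scope ring_scope.
Local Open Scope complex_scope.

Section H.
Variable R : realType.
Local Notation mu := (@lebesgue_measure R).
Implicit Types (x y : R[i]).

Lemma ReD x y : complex.Re (x + y) = complex.Re x + complex.Re y.
Proof. by case: x; case: y. Qed.
Lemma ImD x y : complex.Im (x + y) = complex.Im x + complex.Im y.
Proof. by case: x; case: y. Qed.
Lemma ReN x : complex.Re (- x) = - complex.Re x.
Proof. by case: x. Qed.
Lemma ImN x : complex.Im (- x) = - complex.Im x.
Proof. by case: x. Qed.
Lemma ReM x y : complex.Re (x * y) = complex.Re x * complex.Re y - complex.Im x * complex.Im y.
Proof. by case: x; case: y. Qed.
Lemma ImM x y : complex.Im (x * y) = complex.Re x * complex.Im y + complex.Im x * complex.Re y.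
Proof. by case: x => a b; case: y => c d /=; rewrite addrC. Qed.
Lemma Re_rc (r : R) : complex.Re r%:C = r. Proof. by []. Qed.
Lemma Im_rc (r : R) : complex.Im r%:C = 0. Proof. by []. Qed.
Lemma natC n : (n%:R : R[i]) = (n%:R : R)%:C.
Proof. by rewrite rmorph_nat. Qed.
Lemma invC (r : R) : (r%:C)^-1 = (r^-1)%:C.
Proof. by rewrite fmorphV. Qed.
Lemma Re1 : complex.Re (1 : R[i]) = 1. Proof. by []. Qed.
Lemma Im1 : complex.Im (1 : R[i]) = 0. Proof. by []. Qed.
Lemma Re0 : complex.Re (0 : R[i]) = 0. Proof. by []. Qed.
Lemma Im0 : complex.Im (0 : R[i]) = 0. Proof. by []. Qed.
Lemma Reiu : complex.Re (iu R) = 0. Proof. by []. Qed.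
Lemma Imiu : complex.Im (iu R) = 1. Proof. by []. Qed.
Lemma ceq x y : complex.Re x = complex.Re y -> complex.Im x = complex.Im y -> x = y.
Proof. by case: x => a b; case: y => c d /= -> ->. Qed.
Lemma iuiu : iu R * iu R = -1.
Proof. by apply: ceq; rewrite ?ReM ?ImM /= ?ReN ?ImN /=; ring. Qed.
Lemma conj2iu : Num.conj (2%:R * iu R) = - (2%:R * iu R).
Proof. by apply: ceq; rewrite ?ReM ?ImM ?ReN ?ImN /=; ring. Qed.

Lemma mu_itv (x : R) : 0 <= x -> mu `[0, x] = x%:E.
Proof.
move=> x0; rewrite lebesgue_measure_itv /= lte_fin oppr0 adde0.
case: ifPn => // ; rewrite -leNgt => hx.
by have -> : x = 0 by apply/le_anti; rewrite hx x0.
Qed.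

Lemma int_cst (k x : R) : 0 <= x -> \int[mu]_(t in `[0, x]) k = k * x.
Proof.
move=> x0; rewrite Rintegral_cst; last exact: measurable_itv.
rewrite -[fine _]/(fine (lebesgue_measure `[0,x])).
rewrite lebesgue_measure_itv /= lte_fin oppr0 adde0.
case: ifPn => //= ; rewrite -leNgt => hx.
by have -> : x = 0 by apply/le_anti; rewrite hx x0.
Qed.

Lemma integrable_cont (f : R -> R) : continuous (f : R^o -> R^o) -> mu.-integrable `[0, 1] (EFin \o f).
Proof.
move=> cf; apply: continuous_compact_integrable; first exact: segment_compact.
exact: continuous_subspaceT.
Qed.

Lemma int_id : \int[mu]_(t in `[0, 1]) t = 2%:R^-1.
Proof.
have h := @Rintegration_by_substitution_onem R id 1.
rewrite /onem subrr in h.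
have e : \int[mu]_(t in `[0, 1]) t = \int[mu]_(t in `[0, 1]) (1 - t).
  apply: h; first by rewrite ler01 lexx.
  by apply: (@continuous_subspaceT R^o R^o) => x; exact: cvg_id.
have iid : mu.-integrable `[0, 1] (EFin \o id) by apply: integrable_cont => x; exact: cvg_id.
have icst : mu.-integrable `[0, 1] (EFin \o (fun _ : R => 1)) by apply: integrable_cont => x; exact: cvg_cst.
have e2 : \int[mu]_(t in `[0,1]) (1 - t) = \int[mu]_(t in `[0,1]) 1 - \int[mu]_(t in `[0,1]) t.
  by apply: RintegralB => //; exact: measurable_itv.
rewrite e2 int_cst ?ler01 // mul1r in e.
lra.
Qed.

Lemma int_aff (a b : R) : \int[mu]_(t in `[0, 1]) (a + t * b) = a + b / 2%:R.
Proof.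
have icst : mu.-integrable `[0, 1] (EFin \o (fun _ : R => a)) by apply: integrable_cont => x; exact: cvg_cst.
have iid : mu.-integrable `[0, 1] (EFin \o id) by apply: integrable_cont => x; exact: cvg_id.
have iidb : mu.-integrable `[0, 1] (EFin \o (fun t => t * b)).
  by apply: integrable_cont; exact: (@mulrr_continuous R b).
have e2 : \int[mu]_(t in `[0,1]) (a + t * b) = \int[mu]_(t in `[0,1]) a + \int[mu]_(t in `[0,1]) (t * b).
  by apply: RintegralD => //; exact: measurable_itv.
have e3 : \int[mu]_(t in `[0,1]) (t * b) = \int[mu]_(t in `[0,1]) t * b.
  by apply: RintegralZr => //; exact: measurable_itv.
by rewrite e2 e3 int_id int_cst ?ler01 // mulr1 mulrC.
Qed.

Lemma in01 (t : R) : (t \in `[0, 1]) = (0 <= t <= 1).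
Proof. by rewrite in_itv. Qed.

Lemma cint_ext (f h : R -> R[i]) : (forall t, 0 <= t <= 1 -> f t = h t) ->
  cint f 0 1 = cint h 0 1.
Proof.
move=> fh; rewrite /cint; congr (_ +i* _); apply: eq_Rintegral => t;
  rewrite inE /= in01 => /fh ->//.
Qed.

Lemma cint_aff (a b : R[i]) : cint (fun t => a + t%:C * b) 0 1 = a + b / 2%:R.
Proof.
rewrite /cint.
under eq_Rintegral do rewrite ReD ReM Re_rc Im_rc mul0r subr0.
under [X in _ +i* X]eq_Rintegral do rewrite ImD ImM Re_rc Im_rc mul0r addr0.
rewrite !int_aff; apply: ceq; rewrite ?ReD ?ImD ?ReM ?ImM natC invC /=. all: ring.
Qed.

Lemma cint_cst (c : R[i]) (x : R) : 0 <= x -> cint (fun _ => c) 0 x = x%:C * c.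
Proof.
move=> x0; rewrite /cint !int_cst //; apply: ceq; rewrite ?ReM ?ImM /=; ring.
Qed.

Lemma aeS (P Q : R -> Prop) : (forall t, P t -> Q t) ->
  {ae mu, forall t, P t} -> {ae mu, forall t, Q t}.
Proof.
move=> PQ [N [mN N0 sub]]; exists N; split => // t /= nQ; apply: sub => /= /PQ.
exact: nQ.
Qed.

Lemma aeT (P : R -> Prop) : (forall t, P t) -> {ae mu, forall t, P t}.
Proof.
move=> h; exists set0; split; [exact: measurable0 | exact: measure0 |].
by move=> t /= nP; exact: nP (h t).
Qed.

Lemma int_ae (f : R -> R) (k x : R) : 0 <= x <= 1 -> measurable_fun `[(0:R), 1] f ->
  {ae mu, forall t, t \in `[0, 1] -> f t = k} ->
  \int[mu]_(t in `[0, x]) f t = k * x.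
Proof.
move=> /andP[x0 x1] mf ae.
rewrite -(@int_cst k x x0) /Rintegral; congr fine.
apply: ae_eq_integral.
- exact: measurable_itv.
- apply/measurable_EFinP; apply: measurable_funS mf; first exact: measurable_itv.
  by move=> t /=; rewrite !in_itv /= => /andP[-> tx] /=; apply: le_trans x1.
- exact: measurable_cst.
- apply: aeS ae => t ht /=; rewrite in_itv /= => /andP[t0 tx].
  by rewrite ht // in01 t0 (le_trans tx x1).
Qed.

Lemma cint_ae (g : R -> R[i]) (c : R[i]) (x : R) : 0 <= x <= 1 ->
  measurable_fun `[(0:R), 1] (fun t => complex.Re (g t)) ->
  measurable_fun `[(0:R), 1] (fun t => complex.Im (g t)) ->
  {ae mu, forall t, t \in `[0, 1] -> g t = c} ->
  cint g 0 x = x%:C * c.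
Proof.
move=> x01 mre mim ae; rewrite /cint.
rewrite (@int_ae _ (complex.Re c) x x01 mre); last by apply: aeS ae => t h /h ->.
rewrite (@int_ae _ (complex.Im c) x x01 mim); last by apply: aeS ae => t h /h ->.
apply: ceq; rewrite ?ReM ?ImM /=; ring.
Qed.

Lemma ae_pt (P : R -> Prop) (a b : R) : a < b -> {ae mu, forall t, P t} ->
  exists t, a <= t <= b /\ P t.
Proof.
move=> ab [N [mN N0 sub]]; apply: contrapT => nex.
have sN : `[a, b] `<=` N.
  move=> t /=; rewrite in_itv /= => tab; apply: sub => /= Pt; apply: nex.
  by exists t.
have h1 : (lebesgue_measure `[a, b] <= 0)%E.
  apply: le_trans (le_measure mu (mem_set (measurable_itv `[a, b])) (mem_set mN) sN) _.
  by rewrite le_eqVlt; apply/orP; left; apply/eqP; exact: N0.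
move: h1; rewrite lebesgue_measure_itv /= lte_fin ab /= lee_fin; lra.
Qed.

Lemma conj_rc (r : R) : Num.conj (r%:C) = r%:C.
Proof. apply: ceq => /=; ring. Qed.

Lemma conj_rcB (t s : R) : Num.conj (t%:C - s%:C) = t%:C - s%:C.
Proof. apply: ceq => /=; ring. Qed.

Lemma ReC x : complex.Re (Num.conj x) = complex.Re x.
Proof. by case: x. Qed.
Lemma ImC x : complex.Im (Num.conj x) = - complex.Im x.
Proof. by case: x. Qed.

Lemma half : ((1 / 2%:R : R))%:C = (2%:R : R[i])^-1.
Proof. by rewrite mul1r natC invC. Qed.

Lemma solve_iu (a b : R[i]) : iu R * a + b = 0 -> a = iu R * b.
Proof.
move=> h; have e : iu R * a = - b by apply/eqP; rewrite -addr_eq0 h.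
have -> : a = - (iu R * (iu R * a)) by rewrite mulrA iuiu mulN1r opprK.
rewrite e; ring.
Qed.


Lemma eig_struct (V : R[i]) (psi : R -> R[i]) : eigen_eq V 0 psi ->
  exists p c : R[i], (forall x : R, 0 <= x <= 1 -> psi x = p + x%:C * c) /\
   c = iu R * (V * (p - iu R / 2%:R * (p * (Num.conj V) + c * (Num.conj V) / 2%:R))) /\
   p + c = - (p - iu R * (p * (Num.conj V) + c * (Num.conj V) / 2%:R)).
Proof.
case=> g [[[[mre _] [[mim _] hW]] hb] hae].
set K := psi 0 - iu R / 2%:R * ipV V psi.
set c := iu R * (V * K).
have gae : {ae mu, forall t, t \in `[(0:R), 1] -> g t = c}.
  apply: aeS hae => t h /h; rewrite /A_act mul0r => /solve_iu ->.
  by [].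
have hpsi : forall x : R, 0 <= x <= 1 -> psi x = psi 0 + x%:C * c.
  by move=> x x01; rewrite hW // (@cint_ae g c x x01 mre mim gae).
have hip : ipV V psi = psi 0 * (Num.conj V) + c * (Num.conj V) / 2%:R.
  rewrite /ipV /ip01 (@cint_ext _ (fun x : R => psi 0 * (Num.conj V) + x%:C * (c * (Num.conj V)))).
    by rewrite cint_aff.
  by move=> t t01; rewrite hpsi //; ring.
exists (psi 0), c; split => //; split.
  by rewrite {1}/c /K hip.
rewrite -hip -hb (hpsi 1); first by rewrite rmorph1 mul1r.
by rewrite ler01 lexx.
Qed.

Lemma eig_of_aff (V : R[i]) (psi : R -> R[i]) (a b : R[i]) : V = 2%:R * iu R ->
  (forall x : R, 0 <= x <= 1 -> psi x = a + b * (x%:C - (2%:R : R[i])^-1)) ->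
  eigen_eq V 0 psi.
Proof.
move=> hV hpsi.
have hc : Num.conj V = - V by rewrite hV; exact: conj2iu.
have hip : ipV V psi = - (a * V).
  rewrite /ipV /ip01 (@cint_ext _ (fun x : R => (a - b / 2%:R) * (Num.conj V) + x%:C * (b * (Num.conj V)))).
    rewrite cint_aff hc; ring.
  by move=> t t01; rewrite hpsi //; ring.
have p0 : psi 0 = a - b / 2%:R by rewrite hpsi ?lexx ?ler01 //; rewrite raddf0; ring.
have ic : forall r : R, L2_01 (fun _ => r).
    move=> r; split; first exact: measurable_cst.
    by apply: integrable_cont => x; exact: cvg_cst.
exists (fun _ => b); split; [split; [split|] |].
- exact (ic _).
- split; first exact (ic _).
  move=> x x01; rewrite hpsi // p0 cint_cst; last by case/andP: x01.
  ring.
- by rewrite hpsi ?lexx ?ler01 // p0 hip hV rmorph1; field: iuiu.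
- apply: aeT => t _.
  by rewrite /A_act hip p0 hV mul0r; field: iuiu.
Qed.

Lemma indep (a b : R[i]) :
  L2_zero (fun x : R => a * 1 + b * (x%:C - (1 / 2%:R : R)%:C)) -> a = 0 /\ b = 0.
Proof.
move=> hz.
have [t1 [/andP[t10 t1r] h1]] := @ae_pt _ 0 (1/4%:R) ltac:(lra) hz.
have [t2 [/andP[t2l t21] h2]] := @ae_pt _ (3/4%:R) 1 ltac:(lra) hz.
have e1 := h1 ltac:(rewrite in01; apply/andP; split; lra).
have e2 := h2 ltac:(rewrite in01; apply/andP; split; lra).
have hb : b = 0.
  have : b * (t1 - t2)%:C = 0.
    rewrite rmorphB.
    transitivity ((a * 1 + b * (t1%:C - (1 / 2%:R : R)%:C)) - (a * 1 + b * (t2%:C - (1 / 2%:R : R)%:C))).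
      ring.
    by rewrite e1 e2 subr0.
  move/eqP; rewrite mulf_eq0 => /orP[/eqP //|/eqP h].
  exfalso; have := congr1 (@complex.Re R) h; rewrite /=; lra.
split => //.
by move: e1; rewrite hb mul0r addr0 mulr1.
Qed.
End H.
Arguments ReD {R}.
Arguments ImD {R}.
Arguments ReN {R}.
Arguments ImN {R}.
Arguments ReM {R}.
Arguments ImM {R}.
Arguments ceq {R}.
Arguments aeS {R}.
Arguments aeT {R}.
Arguments in01 {R}.
Arguments cint_ext {R}.
Arguments cint_aff {R}.
Arguments cint_cst {R}.
Arguments ae_pt {R}.
Arguments conj_rc {R}.
Arguments solve_iu {R}.
Arguments eig_struct {R}.
Arguments eig_of_aff {R}.
Arguments indep {R}.
Arguments int_ae {R}.
Arguments cint_ae {R}.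
Arguments iuiu {R}.
Arguments half {R}.
Arguments conj_rcB {R}.

Theorem proposition6p1 (R : realType) (V : R[i]) :
  (is_eigenvalue V 0 <-> V = 2%:R * iu R) /\
  (V = 2%:R * iu R ->
     let psi1 := fun _ : R => (1 : R[i]) in
     let psi2 := fun x : R => x%:C - (1 / 2%:R)%:C in
     (forall psi : R -> R[i],
        eigen_eq V 0 psi <->
        exists a b : R[i], forall x : R, 0 <= x <= 1 -> psi x = a * psi1 x + b * psi2 x) /\
     (forall a b : R[i],
        L2_zero (fun x => a * psi1 x + b * psi2 x) -> a = 0 /\ b = 0) /\
     ip01 psi1 psi2 = 0).
Proof.
split; first split.
- case=> psi [eig nz].
  have [p [c [hpsi [E1 E2]]]] := eig_struct _ _ eig.
  set W := Num.conj V in E1 E2.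
  have hS : (p + c / 2%:R) * (2%:R - iu R * W) = 0.
    have -> : (p + c / 2%:R) * (2%:R - iu R * W) =
              (p + c) + (p - iu R * (p * W + c * W / 2%:R)) by field.
    by rewrite E2 addNr.
  move/eqP: hS; rewrite mulf_eq0 => /orP[/eqP hS0 | /eqP hW].
  + have hc : c = 2%:R * (p + c / 2%:R) - 2%:R * p by field.
    rewrite hS0 mulr0 sub0r in hc.
    have E1' : c = iu R * (V * p).
      rewrite {1}E1.
      have -> : p * W + c * W / 2%:R = (p + c / 2%:R) * W by field.
      by rewrite hS0 mul0r mulr0 subr0.
    have : p * (2%:R + iu R * V) = 0.
      rewrite (_ : p * (2%:R + iu R * V) = 2%:R * p + iu R * (V * p)); last by ring.
      by rewrite -E1' hc; ring.
    move/eqP; rewrite mulf_eq0 => /orP[/eqP p0 | /eqP h].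
      exfalso; apply: nz; apply: aeT => t; rewrite in01 => /hpsi ->.
      by rewrite hc p0; ring.
    have hv : iu R * V = - 2%:R by apply/eqP; rewrite -addr_eq0 addrC h.
    have -> : V = - (iu R * (iu R * V)) by rewrite mulrA iuiu mulN1r opprK.
    by rewrite hv; ring.
  + have hv : iu R * W = 2%:R by apply/eqP; rewrite -subr_eq0 -oppr_eq0 opprB hW.
    have hW' : W = - (iu R * (iu R * W)) by rewrite mulrA iuiu mulN1r opprK.
    rewrite hv in hW'.
    rewrite -[LHS]conjCK -/W hW' rmorphN.
    by apply: ceq; rewrite ?ReN ?ImN ?ReC ?ImC ?ReM ?ImM /=; ring.
- move=> hV; exists (fun _ => 1); split.
    by apply: (@eig_of_aff R V _ 1 0 hV) => x _; ring.
  move=> hz; have [] := @indep R 1 0.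
    apply: aeS hz => t h /h; rewrite mul0r addr0 mulr1 => ->.
    by [].
  by move=> /eqP; rewrite oner_eq0.
move=> hV psi1 psi2; split; [|split].
- move=> psi; split.
    move/(eig_struct _ _) => [p [c [hpsi _]]].
    exists (p + c / 2%:R), c => x x01.
    by rewrite hpsi // /psi1 /psi2 half; field.
  case=> a [b hab].
  apply: (@eig_of_aff R V _ a b hV) => x x01.
  by rewrite hab // /psi1 /psi2 half; ring.
- move=> a b; rewrite /psi1 /psi2; exact: indep.
rewrite /ip01 /psi1 /psi2 (@cint_ext R _ (fun x : R => - (2%:R^-1) + x%:C * 1)).
  by rewrite cint_aff; field.
by move=> t _; rewrite mul1r conj_rcB half; ring.
Qed.
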